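(* Let $(G_i)_{i\in I}$ be a family of $g$-barrelled convergence groups. Then the product $\prod_{i\in I}G_i$, with the product convergence structure, is $g$-barrelled.
   Context: All groups are abelian. A convergence group is an abelian group with a convergence structure (an assignment to each point $x$ of a collection of filters converging to $x$). This assignment must satisfy three conditions: point ultrafilters converge to their point; finite intersections of filters converging to $x$ converge to $x$; and finer filters converge. The group operation must be compatible: $\mathcal F\to x$, $\mathcal G\to y$ imply $\mathcal F-\mathcal G\to x-y$. In the product convergence structure, a filter converges iff all its coordinate projections converge. $\mathbb T=\mathbb R/\mathbb Z$. $\Gamma G$ is the group of continuous homomorphisms $G\to\mathbb T$, and $\Gamma_s G$ is $\Gamma G$ with the topology of pointwise convergence. A set $M\subseteq\Gamma G$ is equicontinuous if for every filter $\mathcal F\to0$ in $G$, the filter generated by $\{\varphi(x):\varphi\in M, x\in F\}$, $F\in\mathcal F$, converges to $0$ in $\mathbb T$. A convergence group $G$ is $g$-barrelled if every compact subset of $\Gamma_s G$ is equicontinuous. *)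

(* Defs.v *)
From Stdlib Require Import Reals List.
Open Scope R_scope.

Definition is_filter {X : Type} (F : (X -> Prop) -> Prop) : Prop :=
  F (fun _ => True) /\
  (forall A B : X -> Prop, F A -> (forall x, A x -> B x) -> F B) /\
  (forall A B : X -> Prop, F A -> F B -> F (fun x => A x /\ B x)) /\
  ~ F (fun _ => False).

Definition pt_filter {X : Type} (x : X) : (X -> Prop) -> Prop := fun A => A x.
Definition filter_inter {X : Type} (F G : (X -> Prop) -> Prop) : (X -> Prop) -> Prop :=
  fun A => F A /\ G A.
Definition finer {X : Type} (G F : (X -> Prop) -> Prop) : Prop :=
  forall A, F A -> G A.
Definition image_filter {X Y : Type} (f : X -> Y) (F : (X -> Prop) -> Prop)
  : (Y -> Prop) -> Prop := fun B => F (fun x => B (f x)).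

Record CGData : Type := {
  carrier : Type;
  zero : carrier;
  add : carrier -> carrier -> carrier;
  opp : carrier -> carrier;
  conv : ((carrier -> Prop) -> Prop) -> carrier -> Prop
}.

Definition sub (G : CGData) (x y : carrier G) : carrier G := add G x (opp G y).

Definition filter_sub (G : CGData) (F H : (carrier G -> Prop) -> Prop)
  : (carrier G -> Prop) -> Prop :=
  fun C => exists A B, F A /\ H B /\
    (forall a b, A a -> B b -> C (sub G a b)).

Definition is_conv_group (G : CGData) : Prop :=
  (forall x y z, add G x (add G y z) = add G (add G x y) z) /\
  (forall x y, add G x y = add G y x) /\
  (forall x, add G (zero G) x = x) /\
  (forall x, add G x (opp G x) = zero G) /\
  (forall F x, conv G F x -> is_filter F) /\
  (forall x, conv G (pt_filter x) x) /\
  (forall F H x, conv G F x -> conv G H x -> conv G (filter_inter F H) x) /\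
  (forall F H x, conv G F x -> is_filter H -> finer H F -> conv G H x) /\
  (forall F H x y, conv G F x -> conv G H y -> conv G (filter_sub G F H) (sub G x y)).

(** * The circle group T = R/Z.  Elements of T are represented by real numbers;
    [distT a b] is the distance in T between the classes of a and b. *)
Definition distT (a b : R) : R :=
  let d := frac_part (a - b) in Rmin d (1 - d).

(** A map G -> T, represented by a function G -> R (values modulo Z). *)
Definition is_hom (G : CGData) (phi : carrier G -> R) : Prop :=
  forall x y, exists k : Z, phi (add G x y) = phi x + phi y + IZR k.

Definition continuous_T (G : CGData) (phi : carrier G -> R) : Prop :=
  forall F x, conv G F x ->
    forall eps, 0 < eps -> image_filter phi F (fun t => distT t (phi x) < eps).

Definition character (G : CGData) (phi : carrier G -> R) : Prop :=
  is_hom G phi /\ continuous_T G phi.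

Definition open_s (G : CGData) (U : (carrier G -> R) -> Prop) : Prop :=
  forall phi, character G phi -> U phi ->
    exists (xs : list (carrier G)) (eps : R), 0 < eps /\
      forall psi, character G psi ->
        (forall x, In x xs -> distT (psi x) (phi x) < eps) -> U psi.

Definition compact_s (G : CGData) (M : (carrier G -> R) -> Prop) : Prop :=
  (forall phi, M phi -> character G phi) /\
  forall (J : Type) (U : J -> (carrier G -> R) -> Prop),
    (forall j, open_s G (U j)) ->
    (forall phi, M phi -> exists j, U j phi) ->
    exists js : list J, forall phi, M phi -> exists j, In j js /\ U j phi.

(** equicontinuity: for F -> 0, the filter generated by the sets
    {phi(x) : phi in M, x in A}, A in F, converges to 0 in T *)
Definition equicontinuous (G : CGData) (M : (carrier G -> R) -> Prop) : Prop :=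
  forall F, conv G F (zero G) ->
    forall eps, 0 < eps ->
      exists A, F A /\ forall phi x, M phi -> A x -> distT (phi x) 0 < eps.

Definition g_barrelled (G : CGData) : Prop :=
  forall M, compact_s G M -> equicontinuous G M.

Definition prod_cg (I : Type) (G : I -> CGData) : CGData := {|
  carrier := forall i, carrier (G i);
  zero := fun i => zero (G i);
  add := fun x y i => add (G i) (x i) (y i);
  opp := fun x i => opp (G i) (x i);
  conv := fun F x => is_filter F /\
            forall i, conv (G i) (image_filter (fun y => y i) F) (x i)
|}.

(* Main.v *)
Require Import Defs.
From Stdlib Require Import Reals List Lra Lia ZArith Classical ClassicalEpsilon FunctionalExtensionality Eqdep.
Open Scope R_scope.

Definition NT (t : R) : R := distT t 0.
Definition isZ (t : R) : Prop := exists k : Z, t = IZR k.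

Lemma NT_le (t : R) (k : Z) : NT t <= Rabs (t - IZR k).
Proof.
  unfold NT, distT, frac_part. rewrite Rminus_0_r.
  destruct (base_Int_part t) as [H1 H2].
  set (n := Int_part t) in *.
  destruct (Z_le_gt_dec k n) as [Hk|Hk].
  - apply IZR_le in Hk. apply Rle_trans with (t - IZR n). apply Rmin_l.
    rewrite Rabs_right; lra.
  - assert (Hk' : (n + 1 <= k)%Z) by lia. apply IZR_le in Hk'. rewrite plus_IZR in Hk'.
    apply Rle_trans with (1 - (t - IZR n)). apply Rmin_r.
    rewrite Rabs_left1; lra.
Qed.

Lemma NT_ex (t : R) : exists k : Z, NT t = Rabs (t - IZR k).
Proof.
  unfold NT, distT, frac_part. rewrite Rminus_0_r.
  destruct (base_Int_part t) as [H1 H2].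
  set (n := Int_part t) in *.
  unfold Rmin; destruct (Rle_dec _ _).
  - exists n. rewrite Rabs_right; lra.
  - exists (n+1)%Z. rewrite plus_IZR. rewrite Rabs_left1; lra.
Qed.

Lemma NT_nonneg t : 0 <= NT t.
Proof. destruct (NT_ex t) as [k ->]. apply Rabs_pos. Qed.

Lemma NT_add u v : NT (u + v) <= NT u + NT v.
Proof.
  destruct (NT_ex u) as [a Ha]; destruct (NT_ex v) as [b Hb].
  apply Rle_trans with (Rabs (u + v - IZR (a + b))). apply NT_le.
  rewrite Ha, Hb, plus_IZR.
  replace (u + v - (IZR a + IZR b)) with ((u - IZR a) + (v - IZR b)) by ring.
  apply Rabs_triang.
Qed.

Lemma NT_IZR k : NT (IZR k) = 0.
Proof.
  apply Rle_antisym. 2: apply NT_nonneg.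
  apply Rle_trans with (Rabs (IZR k - IZR k)). apply NT_le.
  rewrite Rminus_diag, Rabs_R0. lra.
Qed.

Lemma NT_isZ t : isZ t -> NT t = 0.
Proof. intros [k ->]; apply NT_IZR. Qed.

Lemma NT_zero_isZ t : NT t = 0 -> isZ t.
Proof.
  intro H. destruct (NT_ex t) as [k Hk]. exists k.
  rewrite H in Hk. symmetry in Hk. destruct (Rcase_abs (t - IZR k)); [rewrite Rabs_left in Hk|rewrite Rabs_right in Hk]; lra.
Qed.

Lemma NT_shift u k : NT (u + IZR k) = NT u.
Proof.
  apply Rle_antisym.
  - destruct (NT_ex u) as [a Ha]. rewrite Ha.
    apply Rle_trans with (Rabs (u + IZR k - IZR (a + k))). apply NT_le.
    rewrite plus_IZR. right. f_equal. ring.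
  - destruct (NT_ex (u + IZR k)) as [a Ha]. rewrite Ha.
    apply Rle_trans with (Rabs (u - IZR (a - k))). apply NT_le.
    rewrite minus_IZR. right. f_equal. ring.
Qed.

Lemma NT_opp u : NT (- u) = NT u.
Proof.
  assert (forall u, NT (-u) <= NT u).
  { intro w. destruct (NT_ex w) as [a Ha]. rewrite Ha.
    apply Rle_trans with (Rabs (- w - IZR (- a))). apply NT_le.
    rewrite opp_IZR. right. rewrite <- Rabs_Ropp. f_equal. ring. }
  apply Rle_antisym. apply H. rewrite <- (Ropp_involutive u) at 1. apply H.
Qed.

Lemma NT_small s : 0 <= s <= 1/2 -> NT s = s.
Proof.
  intro Hs. apply Rle_antisym.
  - apply Rle_trans with (Rabs (s - IZR 0)). apply NT_le. rewrite Rminus_0_r, Rabs_right; lra.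
  - destruct (NT_ex s) as [k ->].
    destruct (Z_le_gt_dec k 0) as [Hk|Hk].
    + apply IZR_le in Hk. rewrite Rabs_right; lra.
    + assert (Hk' : (1 <= k)%Z) by lia. apply IZR_le in Hk'. rewrite Rabs_left1; lra.
Qed.

Definition eqZ (u v : R) : Prop := exists k : Z, u = v + IZR k.

Lemma NT_eqZ u v : eqZ u v -> NT u = NT v.
Proof. intros [k ->]. apply NT_shift. Qed.

Lemma small_subgroup t : (forall n : nat, NT (INR n * t) < 1/4) -> NT t = 0.
Proof.
  intro H.
  destruct (NT_ex t) as [k Hk]. set (d := NT t) in *.
  assert (Hd0 : 0 <= d) by apply NT_nonneg.
  assert (Hd1 : d < 1/4). { specialize (H 1%nat). simpl in H. rewrite Rmult_1_l in H. exact H. }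
  assert (Hn : forall n, NT (INR n * t) = NT (INR n * d)).
  { intro n. unfold Rabs in Hk. destruct (Rcase_abs (t - IZR k)).
    - replace (INR n * t) with (- (INR n * d) + IZR (Z.of_nat n * k)).
      rewrite NT_shift, NT_opp. reflexivity.
      rewrite mult_IZR, <- INR_IZR_INZ. rewrite Hk. ring.
    - replace (INR n * t) with ((INR n * d) + IZR (Z.of_nat n * k)).
      rewrite NT_shift. reflexivity.
      rewrite mult_IZR, <- INR_IZR_INZ. rewrite Hk. ring. }
  assert (Hall : forall n, INR n * d < 1/4).
  { induction n. simpl. lra.
    rewrite S_INR. specialize (H (S n)). rewrite Hn, S_INR in H.
    rewrite NT_small in H. exact H. split. apply Rmult_le_pos; [|lra].
    pose proof (pos_INR n). lra. lra. }
  destruct (Rle_lt_or_eq_dec 0 d Hd0) as [Hp|Hz]; [|auto].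
  exfalso. destruct (archimed (1 / d)) as [A1 A2].
  assert (Hu : (0 < up (1/d))%Z). { apply lt_IZR. apply Rlt_trans with (1/d). 2: lra.
    unfold Rdiv; rewrite Rmult_1_l; apply Rinv_0_lt_compat; lra. }
  specialize (Hall (Z.to_nat (up (1/d)))).
  rewrite INR_IZR_INZ, Z2Nat.id in Hall by lia.
  assert (IZR (up (1/d)) * d > 1/d * d) by (apply Rmult_gt_compat_r; lra).
  replace (1/d*d) with 1 in H0 by (field; lra). lra.
Qed.

Lemma big_multiple t : ~ isZ t -> exists n : nat, NT (INR n * t) >= 1/4.
Proof.
  intro H. apply NNPP. intro H2. apply H. apply NT_zero_isZ. apply small_subgroup.
  intro n. apply Rnot_ge_lt. intro H3. apply H2. exists n. exact H3.
Qed.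

Lemma shift_choice p t : ~ isZ t -> exists c : nat, NT (p + INR c * t) >= 1/8.
Proof.
  intro H. destruct (Rge_or_gt (NT p) (1/8)) as [Hp|Hp].
  - exists 0%nat. simpl. rewrite Rmult_0_l, Rplus_0_r. exact Hp.
  - destruct (big_multiple t H) as [n Hn]. exists n.
    pose proof (NT_add (p + INR n * t) (- p)). rewrite NT_opp in H0.
    replace (p + INR n * t + - p) with (INR n * t) in H0 by ring. lra.
Qed.

Lemma distT_NT a b : distT a b = NT (a - b).
Proof. unfold NT, distT. rewrite Rminus_0_r. reflexivity. Qed.


Lemma cg_add0l G : is_conv_group G -> forall x, add G (zero G) x = x.
Proof. intros H; apply H. Qed.
Lemma cg_addC G : is_conv_group G -> forall x y, add G x y = add G y x.
Proof. intros H; apply H. Qed.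
Lemma cg_addA G : is_conv_group G -> forall x y z, add G x (add G y z) = add G (add G x y) z.
Proof. intros H; apply H. Qed.
Lemma cg_addN G : is_conv_group G -> forall x, add G x (opp G x) = zero G.
Proof. intros H; apply H. Qed.
Lemma cg_add0r G : is_conv_group G -> forall x, add G x (zero G) = x.
Proof. intros H x. rewrite cg_addC by exact H. apply cg_add0l, H. Qed.
Lemma cg_filter G : is_conv_group G -> forall F x, conv G F x -> is_filter F.
Proof. intros H; apply H. Qed.
Lemma cg_pt G : is_conv_group G -> forall x, conv G (pt_filter x) x.
Proof. intros H; apply H. Qed.
Lemma cg_finer G : is_conv_group G -> forall F H x, conv G F x -> is_filter H -> finer H F -> conv G H x.
Proof. intros H; apply H. Qed.

Lemma image_is_filter {X Y} (f : X -> Y) F : is_filter F -> is_filter (image_filter f F).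
Proof.
  intros [H1 [H2 [H3 H4]]]. unfold image_filter. repeat split.
  - apply H2 with (fun _ => True); auto.
  - intros A B HA HAB. apply H2 with (fun x => A (f x)); auto.
  - intros A B HA HB. apply H3; auto.
  - intro HF. apply H4. apply H2 with (fun x => False); auto.
Qed.

Fixpoint mult (G : CGData) (n : nat) (y : carrier G) : carrier G :=
  match n with O => zero G | S n => add G y (mult G n y) end.

Lemma hom_eqZ G phi a b : is_hom G phi -> eqZ (phi (add G a b)) (phi a + phi b).
Proof. intros H. destruct (H a b) as [k Hk]. exists k. exact Hk. Qed.

Lemma hom_zero G phi : is_hom G phi -> add G (zero G) (zero G) = zero G -> isZ (phi (zero G)).
Proof.
  intros H H0. destruct (H (zero G) (zero G)) as [k Hk]. rewrite H0 in Hk.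
  exists (- k)%Z. rewrite opp_IZR. lra.
Qed.

Lemma hom_mult G phi y n : is_hom G phi -> add G (zero G) (zero G) = zero G ->
  eqZ (phi (mult G n y)) (INR n * phi y).
Proof.
  intros H H0. induction n as [|n IH].
  - destruct (hom_zero G phi H H0) as [k Hk]. exists k. simpl. lra.
  - simpl mult. destruct (H y (mult G n y)) as [k Hk]. destruct IH as [l Hl].
    exists (k + l)%Z. rewrite Hk, Hl, plus_IZR, S_INR. ring.
Qed.

Definition HL {I : Type} {G : I -> CGData} (L : list I) (x : carrier (prod_cg I G)) : Prop :=
  forall j, In j L -> x j = zero (G j).

Lemma P_add00 (I : Type) (G : I -> CGData) : (forall i, is_conv_group (G i)) ->
  add (prod_cg I G) (zero (prod_cg I G)) (zero (prod_cg I G)) = zero (prod_cg I G).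
Proof. intros HG. apply functional_extensionality_dep; intro i. simpl. apply cg_add0l, HG. Qed.

Lemma eqZ_trans u v w : eqZ u v -> eqZ v w -> eqZ u w.
Proof. intros [a Ha] [b Hb]. exists (b + a)%Z. rewrite plus_IZR. lra. Qed.
Lemma eqZ_sym u v : eqZ u v -> eqZ v u.
Proof. intros [a Ha]. exists (- a)%Z. rewrite opp_IZR. lra. Qed.
Lemma eqZ_refl u : eqZ u u.
Proof. exists 0%Z. simpl. lra. Qed.
Lemma eqZ_plus u u' v v' : eqZ u u' -> eqZ v v' -> eqZ (u + v) (u' + v').
Proof. intros [a Ha] [b Hb]. exists (a + b)%Z. rewrite plus_IZR. lra. Qed.
Lemma isZ_eqZ u : isZ u -> eqZ u 0.
Proof. intros [a Ha]. exists a. lra. Qed.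

Lemma agree_gen (I : Type) (G : I -> CGData) (phi : carrier (prod_cg I G) -> R) (L : list I) a b :
  (forall i, is_conv_group (G i)) -> is_hom (prod_cg I G) phi ->
  (forall x, HL L x -> isZ (phi x)) ->
  (forall i, In i L -> a i = b i) -> eqZ (phi a) (phi b).
Proof.
  intros HG Hh HL0 Hab.
  set (d := (fun i => add (G i) (a i) (opp (G i) (b i))) : carrier (prod_cg I G)).
  assert (Ha : a = add (prod_cg I G) b d).
  { apply functional_extensionality_dep; intro i. simpl. unfold d.
    rewrite (cg_addA _ (HG i)), (cg_addC _ (HG i) (b i) (a i)), <- (cg_addA _ (HG i)).
    rewrite (cg_addN _ (HG i)), (cg_add0r _ (HG i)). reflexivity. }
  assert (Hd : isZ (phi d)).
  { apply HL0. intros j Hj. unfold d. rewrite (Hab j Hj). apply (cg_addN _ (HG j)). }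
  rewrite Ha. eapply eqZ_trans. apply hom_eqZ, Hh.
  replace (phi b) with (phi b + 0) at 2 by ring. apply eqZ_plus. apply eqZ_refl. apply isZ_eqZ, Hd.
Qed.

Lemma char_support (I : Type) (G : I -> CGData) (phi : carrier (prod_cg I G) -> R) :
  (forall i, is_conv_group (G i)) -> character (prod_cg I G) phi ->
  exists L, forall x, HL L x -> isZ (phi x).
Proof.
  intros HG [Hh Hc].
  set (F := fun (A : carrier (prod_cg I G) -> Prop) => exists L, forall x, HL L x -> A x).
  assert (HF : is_filter F).
  { unfold F. repeat split.
    - exists nil. auto.
    - intros A B [L HL1] HAB. exists L. auto.
    - intros A B [L1 H1] [L2 H2]. exists (L1 ++ L2). intros x Hx. split.
      + apply H1. intros j Hj. apply Hx. apply in_or_app; auto.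
      + apply H2. intros j Hj. apply Hx. apply in_or_app; auto.
    - intros [L HL1]. apply (HL1 (zero (prod_cg I G))). intros j _. reflexivity. }
  assert (Hconv : conv (prod_cg I G) F (zero (prod_cg I G))).
  { simpl. split. exact HF. intro i.
    apply (cg_finer _ (HG i)) with (pt_filter (zero (G i))).
    apply cg_pt, HG. apply image_is_filter, HF.
    intros B HB. unfold image_filter, F. exists (i :: nil). intros x Hx.
    rewrite (Hx i). exact HB. left; reflexivity. }
  destruct (Hc _ _ Hconv (1/4) ltac:(lra)) as [L HLs].
  exists L. intros x Hx.
  assert (H0 : isZ (phi (zero (prod_cg I G)))) by (apply hom_zero; [exact Hh| apply P_add00, HG]).
  apply NT_zero_isZ, small_subgroup. intro n.
  assert (Hm : HL L (mult (prod_cg I G) n x)).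
  { intros j Hj. clear HLs. induction n. reflexivity. simpl. rewrite IHn, (Hx j Hj). apply cg_add0l, HG. }
  specialize (HLs _ Hm). rewrite distT_NT in HLs.
  destruct H0 as [k0 Hk0]. rewrite Hk0 in HLs. unfold Rminus in HLs.
  rewrite <- opp_IZR, NT_shift in HLs.
  rewrite <- (NT_eqZ _ _ (hom_mult _ phi x n Hh (P_add00 I G HG))). exact HLs.
Qed.

Definition Supp {I : Type} {G : I -> CGData} (phi : carrier (prod_cg I G) -> R) : list I :=
  epsilon (inhabits nil) (fun L => forall x, HL L x -> isZ (phi x)).

Lemma Supp_spec (I : Type) (G : I -> CGData) (phi : carrier (prod_cg I G) -> R) :
  (forall i, is_conv_group (G i)) -> character (prod_cg I G) phi ->
  forall x, HL (Supp phi) x -> isZ (phi x).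
Proof.
  intros HG Hc. unfold Supp. apply epsilon_spec. apply char_support; auto.
Qed.

Definition restrict {I : Type} {G : I -> CGData} (S : list I) (x : carrier (prod_cg I G))
  : carrier (prod_cg I G) :=
  fun i => if excluded_middle_informative (In i S) then x i else zero (G i).


Fixpoint Jseq {I : Type} {G : I -> CGData} (pf : list I -> carrier (prod_cg I G) -> R) (n : nat) : list I :=
  match n with O => nil | S n => Jseq pf n ++ Supp (pf (Jseq pf n)) end.

Definition yn {I : Type} {G : I -> CGData} (pf : list I -> carrier (prod_cg I G) -> R)
  (px : list I -> carrier (prod_cg I G)) (n : nat) : carrier (prod_cg I G) :=
  restrict (Supp (pf (Jseq pf n))) (px (Jseq pf n)).

Definition cc (p t : R) : nat := epsilon (inhabits 0%nat) (fun c => NT (p + INR c * t) >= 1/8).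

Fixpoint zseq {I : Type} {G : I -> CGData} (pf : list I -> carrier (prod_cg I G) -> R)
  (px : list I -> carrier (prod_cg I G)) (m n : nat) : carrier (prod_cg I G) :=
  match n with
  | O => zero (prod_cg I G)
  | S n => if Nat.leb n m then zseq pf px m n else
      add (prod_cg I G) (zseq pf px m n)
        (mult (prod_cg I G) (cc (pf (Jseq pf n) (zseq pf px m n)) (pf (Jseq pf n) (yn pf px n))) (yn pf px n))
  end.

Definition Kof {I : Type} {G : I -> CGData} (pf : list I -> carrier (prod_cg I G) -> R) (i : I) : nat :=
  epsilon (inhabits 0%nat) (fun K => In i (Jseq pf K)).

Definition xlim {I : Type} {G : I -> CGData} (pf : list I -> carrier (prod_cg I G) -> R)
  (px : list I -> carrier (prod_cg I G)) (m : nat) : carrier (prod_cg I G) :=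
  fun i => zseq pf px m (Kof pf i) i.

Lemma Jmono {I : Type} {G : I -> CGData} (pf : list I -> carrier (prod_cg I G) -> R) K K' i :
  (K <= K')%nat -> In i (Jseq pf K) -> In i (Jseq pf K').
Proof. intros Hle H. induction Hle. exact H. simpl. apply in_or_app. left; exact IHHle. Qed.

Lemma mult_zero_at {I : Type} {G : I -> CGData} (HG : forall i, is_conv_group (G i)) c
  (y : carrier (prod_cg I G)) i : y i = zero (G i) -> mult (prod_cg I G) c y i = zero (G i).
Proof. intro H. induction c. reflexivity. simpl. rewrite IHc, H. apply cg_add0l, HG. Qed.

Lemma yn_HL {I : Type} {G : I -> CGData} pf px n :
  (forall L, HL L (px L)) -> @HL I G (Jseq pf n) (yn pf px n).
Proof.
  intros Hp j Hj. unfold yn, restrict. destruct (excluded_middle_informative _).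
  apply Hp, Hj. reflexivity.
Qed.

Lemma yn_out {I : Type} {G : I -> CGData} pf px n i :
  ~ In i (@Jseq I G pf (S n)) -> yn pf px n i = zero (G i).
Proof.
  intros Hn. unfold yn, restrict. destruct (excluded_middle_informative _) as [h|h]; [|reflexivity].
  exfalso. apply Hn. simpl. apply in_or_app; right; exact h.
Qed.

Lemma zseq_out {I : Type} {G : I -> CGData} (HG : forall i, is_conv_group (G i)) pf px m K i :
  ~ In i (@Jseq I G pf K) -> zseq pf px m K i = zero (G i).
Proof.
  induction K as [|K IH]; intro Hn. reflexivity.
  assert (Hn' : ~ In i (Jseq pf K)). { intro h. apply Hn. apply Jmono with K. lia. exact h. }
  simpl zseq. destruct (Nat.leb K m). apply IH, Hn'.
  simpl. rewrite IH by exact Hn'. rewrite mult_zero_at; [apply cg_add0l, HG| exact HG |].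
  apply yn_out, Hn.
Qed.

Lemma zseq_stable {I : Type} {G : I -> CGData} (HG : forall i, is_conv_group (G i)) pf px m K K' i :
  (forall L, HL L (px L)) ->
  In i (@Jseq I G pf K) -> (K <= K')%nat -> zseq pf px m K' i = zseq pf px m K i.
Proof.
  intros Hp Hi Hle. induction Hle. reflexivity.
  simpl zseq. destruct (Nat.leb m0 m). exact IHHle.
  simpl. rewrite mult_zero_at; [| exact HG |]. rewrite cg_add0r by apply HG. exact IHHle.
  apply yn_HL. exact Hp. apply Jmono with K; assumption.
Qed.

Lemma zseq_small {I : Type} {G : I -> CGData} pf px m K :
  (K <= S m)%nat -> @zseq I G pf px m K = zero (prod_cg I G).
Proof.
  induction K as [|K IH]; intro Hle. reflexivity.
  simpl zseq. assert (Nat.leb K m = true) by (apply Nat.leb_le; lia). rewrite H. apply IH. lia.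
Qed.

Lemma xlim_agree {I : Type} {G : I -> CGData} (HG : forall i, is_conv_group (G i)) pf px m K i :
  (forall L, HL L (px L)) ->
  In i (@Jseq I G pf K) -> xlim pf px m i = zseq pf px m K i.
Proof.
  intros Hp Hi. unfold xlim.
  assert (HK : In i (Jseq pf (Kof pf i))). { unfold Kof. apply epsilon_spec. exists K. exact Hi. }
  destruct (Nat.le_ge_cases (Kof pf i) K) as [h|h].
  - symmetry. apply zseq_stable; assumption.
  - apply zseq_stable; assumption.
Qed.

Lemma xlim_out {I : Type} {G : I -> CGData} (HG : forall i, is_conv_group (G i)) pf px m i :
  (~ exists K, In i (@Jseq I G pf K)) -> xlim pf px m i = zero (G i).
Proof.
  intros Hn. unfold xlim. apply zseq_out. exact HG. intro h. apply Hn. eexists; exact h.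
Qed.

Lemma cover_index {I : Type} {G : I -> CGData} (pf : list I -> carrier (prod_cg I G) -> R) (S : list I) :
  exists m, forall i, In i S -> (exists K, In i (Jseq pf K)) -> In i (Jseq pf m).
Proof.
  induction S as [|a S [m Hm]].
  - exists 0%nat. intros i [].
  - destruct (classic (exists K, In a (Jseq pf K))) as [[K HK]|HK].
    + exists (Nat.max K m). intros i [<-|Hi] Hex.
      * apply Jmono with K. lia. exact HK.
      * apply Jmono with m. lia. apply Hm; assumption.
    + exists m. intros i [<-|Hi] Hex. contradiction. apply Hm; assumption.
Qed.

Fixpoint sumlist (l : list nat) : nat := match l with nil => O | a :: l => (a + sumlist l)%nat end.
Lemma sumlist_le l m : In m l -> (m <= sumlist l)%nat.
Proof. induction l as [|a l IHl]; simpl. intros []. intros [<-|h]. lia. specialize (IHl h). lia. Qed.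

Lemma compact_finite (I : Type) (G : I -> CGData) (HG : forall i, is_conv_group (G i))
  (M : (carrier (prod_cg I G) -> R) -> Prop) :
  compact_s (prod_cg I G) M ->
  exists L, forall phi, M phi -> forall x, HL L x -> isZ (phi x).
Proof.
  intros [Hchar Hcov].
  apply NNPP; intro Hno.
  assert (Hex : forall L, exists p : (carrier (prod_cg I G) -> R) * carrier (prod_cg I G),
    M (fst p) /\ HL L (snd p) /\ ~ isZ (fst p (snd p))).
  { intro L. apply NNPP. intro h. apply Hno. exists L. intros phi Hphi x Hx.
    apply NNPP. intro hz. apply h. exists (phi, x). simpl. auto. }
  set (pick := fun L => epsilon (inhabits ((fun _ => 0), zero (prod_cg I G)))
     (fun p : (carrier (prod_cg I G) -> R) * carrier (prod_cg I G) =>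
        M (fst p) /\ HL L (snd p) /\ ~ isZ (fst p (snd p)))).
  set (pf := fun L => fst (pick L)). set (px := fun L => snd (pick L)).
  assert (Hpick : forall L, M (pf L) /\ HL L (px L) /\ ~ isZ (pf L (px L))).
  { intro L. unfold pf, px, pick. apply (@epsilon_spec _ _ (fun p => M (fst p) /\ HL L (snd p) /\ ~ isZ (fst p (snd p)))). apply Hex. }
  assert (HpxL : forall L, HL L (px L)) by (intro L; apply Hpick).
  assert (Hpc : forall n, character (prod_cg I G) (pf (Jseq pf n))) by (intro n; apply Hchar, Hpick).
  assert (Ht : forall n, ~ isZ (pf (Jseq pf n) (yn pf px n))).
  { intros n hz. destruct (Hpick (Jseq pf n)) as [_ [_ Hn]]. apply Hn.
    destruct hz as [k Hk].
    destruct (agree_gen I G (pf (Jseq pf n)) (Supp (pf (Jseq pf n))) (px (Jseq pf n)) (yn pf px n) HG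
      (proj1 (Hpc n)) (Supp_spec I G _ HG (Hpc n))) as [l Hl].
    { intros i Hi. unfold yn, restrict. destruct (excluded_middle_informative _). reflexivity. contradiction. }
    exists (k + l)%Z. rewrite Hl, Hk, plus_IZR. ring. }
  set (V := fun m (psi : carrier (prod_cg I G) -> R) => NT (psi (xlim pf px m)) < 1/8).
  assert (Hopen : forall m, open_s (prod_cg I G) (V m)).
  { intros m phi _ Hphi. exists (xlim pf px m :: nil), (1/8 - NT (phi (xlim pf px m))).
    split. unfold V in Hphi. lra.
    intros psi _ Hd. specialize (Hd _ (or_introl eq_refl)). rewrite distT_NT in Hd. unfold V.
    pose proof (NT_add (psi (xlim pf px m) - phi (xlim pf px m)) (phi (xlim pf px m))).
    replace (psi (xlim pf px m) - phi (xlim pf px m) + phi (xlim pf px m)) with (psi (xlim pf px m)) in H by ring.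
    lra. }
  assert (Hcovers : forall psi, M psi -> exists m, V m psi).
  { intros psi Hpsi. destruct (cover_index pf (Supp psi)) as [m Hm]. exists m. unfold V.
    rewrite NT_isZ. lra. apply Supp_spec. exact HG. apply Hchar, Hpsi.
    intros j Hj. destruct (classic (exists K, In j (Jseq pf K))) as [Hk|Hk].
    - rewrite (xlim_agree HG pf px m m j HpxL (Hm j Hj Hk)).
      rewrite zseq_small by lia. reflexivity.
    - apply xlim_out; assumption. }
  destruct (Hcov nat V Hopen Hcovers) as [js Hjs].
  set (n := S (sumlist js)).
  destruct (Hjs (pf (Jseq pf n)) (proj1 (Hpick _))) as [m [Hmj Hm]].
  assert (Hmn : (m < n)%nat) by (pose proof (sumlist_le js m Hmj); unfold n; lia).
  unfold V in Hm.
  assert (Hag : eqZ (pf (Jseq pf n) (xlim pf px m)) (pf (Jseq pf n) (zseq pf px m (S n)))).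
  { apply (agree_gen I G _ (Supp (pf (Jseq pf n)))). exact HG. apply Hpc. apply Supp_spec. exact HG. apply Hpc.
    intros i Hi. apply xlim_agree. exact HG. exact HpxL. simpl. apply in_or_app. right. exact Hi. }
  rewrite (NT_eqZ _ _ Hag) in Hm.
  assert (Hz : zseq pf px m (S n) = add (prod_cg I G) (zseq pf px m n)
        (mult (prod_cg I G) (cc (pf (Jseq pf n) (zseq pf px m n)) (pf (Jseq pf n) (yn pf px n))) (yn pf px n))).
  { change (zseq pf px m (S n)) with (if Nat.leb n m then zseq pf px m n else
      add (prod_cg I G) (zseq pf px m n)
        (mult (prod_cg I G) (cc (pf (Jseq pf n) (zseq pf px m n)) (pf (Jseq pf n) (yn pf px n))) (yn pf px n))).
    assert (Nat.leb n m = false) by (apply Nat.leb_gt; lia). rewrite H. reflexivity. }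
  rewrite Hz in Hm.
  set (p := pf (Jseq pf n) (zseq pf px m n)) in *.
  set (t := pf (Jseq pf n) (yn pf px n)) in *.
  assert (Hc : NT (p + INR (cc p t) * t) >= 1/8).
  { unfold cc. apply (@epsilon_spec _ _ (fun c => NT (p + INR c * t) >= 1/8)). apply shift_choice, Ht. }
  assert (Heq : eqZ (pf (Jseq pf n) (add (prod_cg I G) (zseq pf px m n) (mult (prod_cg I G) (cc p t) (yn pf px n))))
                    (p + INR (cc p t) * t)).
  { eapply eqZ_trans. apply hom_eqZ, Hpc. apply eqZ_plus. apply eqZ_refl.
    apply hom_mult. apply Hpc. apply P_add00, HG. }
  rewrite (NT_eqZ _ _ Heq) in Hm. lra.
Qed.

Definition inj {I : Type} {G : I -> CGData} (j : I) (y : carrier (G j)) : carrier (prod_cg I G) :=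
  fun i => match excluded_middle_informative (j = i) with
           | left e => eq_rect j (fun k => carrier (G k)) y i e
           | right _ => zero (G i) end.

Lemma inj_at {I : Type} {G : I -> CGData} j y : @inj I G j y j = y.
Proof.
  unfold inj. destruct (excluded_middle_informative (j = j)) as [e|n].
  - rewrite <- Eq_rect_eq.eq_rect_eq. reflexivity.
  - contradiction.
Qed.

Lemma inj_ne {I : Type} {G : I -> CGData} j y i : j <> i -> @inj I G j y i = zero (G i).
Proof.
  intro n. unfold inj. destruct (excluded_middle_informative (j = i)) as [e|_]. contradiction. reflexivity.
Qed.

Lemma inj_add {I : Type} {G : I -> CGData} (HG : forall i, is_conv_group (G i)) j a b :
  @inj I G j (add (G j) a b) = add (prod_cg I G) (inj j a) (inj j b).
Proof.
  apply functional_extensionality_dep; intro i. simpl. unfold inj.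
  destruct (excluded_middle_informative (j = i)) as [e|n].
  - destruct e. reflexivity.
  - symmetry. apply cg_add0l, HG.
Qed.

Lemma char_comp (I : Type) (G : I -> CGData) (HG : forall i, is_conv_group (G i)) j phi :
  character (prod_cg I G) phi -> character (G j) (fun y => phi (inj j y)).
Proof.
  intros [Hh Hc]. split.
  - intros a b. rewrite inj_add by exact HG. apply Hh.
  - intros F y HF eps Heps.
    assert (HFf : is_filter F) by (apply (cg_filter _ (HG j)) with y; exact HF).
    assert (Hconv : conv (prod_cg I G) (image_filter (inj j) F) (inj j y)).
    { simpl. split. apply image_is_filter, HFf. intro i.
      destruct (excluded_middle_informative (j = i)) as [e|n].
      - destruct e. rewrite inj_at.
        apply (cg_finer _ (HG j)) with F. exact HF. apply image_is_filter, image_is_filter, HFf.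
        intros B HB. unfold image_filter.
        replace (fun x => B (inj j x j)) with B. exact HB.
        apply functional_extensionality; intro x. rewrite inj_at. reflexivity.
      - rewrite inj_ne by exact n.
        apply (cg_finer _ (HG i)) with (pt_filter (zero (G i))). apply cg_pt, HG.
        apply image_is_filter, image_is_filter, HFf.
        intros B HB. unfold image_filter. destruct HFf as [T1 [T2 _]].
        apply T2 with (fun _ => True). exact T1. intros x _. rewrite inj_ne by exact n. exact HB. }
    exact (Hc _ _ Hconv eps Heps).
Qed.

Definition Mj {I : Type} {G : I -> CGData} (M : (carrier (prod_cg I G) -> R) -> Prop) (j : I)
  : (carrier (G j) -> R) -> Prop :=
  fun chi => exists phi, M phi /\ chi = (fun y => phi (inj j y)).

Lemma Mj_compact (I : Type) (G : I -> CGData) (HG : forall i, is_conv_group (G i)) M j :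
  compact_s (prod_cg I G) M -> compact_s (G j) (Mj M j).
Proof.
  intros [Hchar Hcov]. split.
  - intros chi [phi [Hphi ->]]. apply char_comp. exact HG. apply Hchar, Hphi.
  - intros J U HU HUc.
    set (U' := fun k (phi : carrier (prod_cg I G) -> R) =>
                 character (prod_cg I G) phi /\ U k (fun y => phi (inj j y))).
    assert (HU' : forall k, open_s (prod_cg I G) (U' k)).
    { intros k phi Hphi [_ Hk].
      destruct (HU k _ (char_comp I G HG j phi Hphi) Hk) as [xs [eps [Heps Hxs]]].
      exists (map (inj j) xs), eps. split. exact Heps.
      intros psi Hpsi Hd. split. exact Hpsi. apply Hxs. apply char_comp; assumption.
      intros x Hx. apply Hd. apply in_map, Hx. }
    assert (HUc' : forall phi, M phi -> exists k, U' k phi).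
    { intros phi Hphi. destruct (HUc (fun y => phi (inj j y))) as [k Hk].
      exists phi. split; auto. exists k. split. apply Hchar, Hphi. exact Hk. }
    destruct (Hcov J U' HU' HUc') as [js Hjs]. exists js.
    intros chi [phi [Hphi ->]]. destruct (Hjs phi Hphi) as [k [Hk [_ HU'k]]].
    exists k. split; assumption.
Qed.

Lemma decomp (I : Type) (G : I -> CGData) (HG : forall i, is_conv_group (G i)) phi
  (x : carrier (prod_cg I G)) (d : R) :
  is_hom (prod_cg I G) phi -> 0 <= d -> forall L,
  (forall j, In j L -> NT (phi (inj j (x j))) <= d) ->
  NT (phi (restrict L x)) <= INR (length L) * d.
Proof.
  intros Hh Hd. induction L as [|a L IH]; intro HL0.
  - assert (restrict nil x = zero (prod_cg I G)).
    { apply functional_extensionality_dep; intro i. unfold restrict.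
      destruct (excluded_middle_informative _) as [[]|]. reflexivity. }
    rewrite H, NT_isZ. simpl. lra. apply hom_zero. exact Hh. apply P_add00, HG.
  - assert (IH' := IH (fun j h => HL0 j (or_intror h))).
    simpl length. rewrite S_INR.
    destruct (classic (In a L)) as [Ha|Ha].
    + assert (restrict (a :: L) x = restrict L x).
      { apply functional_extensionality_dep; intro i. unfold restrict.
        destruct (excluded_middle_informative (In i (a :: L))) as [h1|h1];
        destruct (excluded_middle_informative (In i L)) as [h2|h2]; try reflexivity.
        - exfalso. destruct h1 as [<-|h1]; contradiction.
        - exfalso. apply h1. right. exact h2. }
      rewrite H. lra.
    + assert (restrict (a :: L) x = add (prod_cg I G) (inj a (x a)) (restrict L x)).
      { apply functional_extensionality_dep; intro i. unfold restrict. simpl.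
        destruct (excluded_middle_informative (a = i)) as [e|n].
        - destruct e. rewrite inj_at.
          repeat match goal with |- context [excluded_middle_informative ?P] => destruct (excluded_middle_informative P) end;
          try tauto. symmetry. apply cg_add0r, HG.
        - rewrite inj_ne by exact n. rewrite cg_add0l by apply HG.
          repeat match goal with |- context [excluded_middle_informative ?P] => destruct (excluded_middle_informative P) end;
          try reflexivity; exfalso; tauto. }
      rewrite H. rewrite (NT_eqZ _ _ (hom_eqZ _ _ _ _ Hh)).
      pose proof (NT_add (phi (inj a (x a))) (phi (restrict L x))).
      pose proof (HL0 a (or_introl eq_refl)). lra.
Qed.

Theorem proposition2p9 (I : Type) (G : I -> CGData) :
  (forall i, is_conv_group (G i)) ->
  (forall i, g_barrelled (G i)) ->
  g_barrelled (prod_cg I G).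
Proof.
  intros HG Hb M HM.
  destruct (compact_finite I G HG M HM) as [L HL0].
  intros F HF eps Heps.
  destruct HF as [HFf HFi].
  set (d := eps / (INR (length L) + 1)).
  assert (Hlen : 0 < INR (length L) + 1) by (pose proof (pos_INR (length L)); lra).
  assert (Hd : 0 < d) by (unfold d; apply Rdiv_lt_0_compat; lra).
  assert (HA : forall L', exists A, F A /\ forall x, A x -> forall j, In j L' ->
              forall phi, M phi -> NT (phi (inj j (x j))) < d).
  { induction L' as [|a L' [A [HA1 HA2]]].
    - exists (fun _ => True). split. apply HFf. intros x _ j [].
    - destruct (Hb a (Mj M a) (Mj_compact I G HG M a HM) _ (HFi a) d Hd) as [Aa [HAa1 HAa2]].
      exists (fun x => Aa (x a) /\ A x). split.
      + apply HFf. exact HAa1. exact HA1.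
      + intros x [Hx1 Hx2] j [<-|Hj] phi Hphi.
        * apply (HAa2 (fun y => phi (inj a y))). exists phi. auto. exact Hx1.
        * apply HA2; assumption. }
  destruct (HA L) as [A [HA1 HA2]]. exists A. split. exact HA1.
  intros phi x Hphi Hx. change (NT (phi x) < eps).
  assert (Hc : character (prod_cg I G) phi) by (apply HM, Hphi).
  assert (Hag : eqZ (phi x) (phi (restrict L x))).
  { apply (agree_gen I G phi L). exact HG. apply Hc. apply HL0, Hphi.
    intros i Hi. unfold restrict. destruct (excluded_middle_informative _). reflexivity. contradiction. }
  rewrite (NT_eqZ _ _ Hag).
  assert (H := decomp I G HG phi x d (proj1 Hc) (Rlt_le _ _ Hd) L
    (fun j h => Rlt_le _ _ (HA2 x Hx j h phi Hphi))).
  assert (INR (length L) * d < eps).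
  { unfold d. apply Rmult_lt_reg_r with (INR (length L) + 1). lra.
    field_simplify. lra. lra. }
  lra.
Qed.
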